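(* Let $\mathcal F=\{F_1,\dots,F_k\}$, $\mathcal I_0=\{0,1\}^k$, $\mathcal I=\mathcal I_0\setminus\{\boldsymbol 0\}$, $I=2^k-1$, and let $\mathcal F_{asc}$ be a nonempty ascending class of nonempty subsets of $\mathcal F$, with $\mathcal F_{des}=2^{\mathcal F}\setminus\mathcal F_{asc}\setminus\{\varnothing\}$. Let $\mathbf A$ be the $|\mathcal F_{des}|\times I$ matrix with entry $1$ in row $W\in\mathcal F_{des}$, column $\boldsymbol i\in\mathcal I$ if $W\subseteq\phi(\boldsymbol i)$ and $0$ otherwise, and let $$\mathbf A_1=\begin{pmatrix}\boldsymbol 1^\top\\ \mathbf A\end{pmatrix},\qquad \mathbf A_0=\begin{pmatrix}1&\boldsymbol 1^\top\\ \boldsymbol 0&\mathbf A\end{pmatrix},$$ of sizes $(|\mathcal F_{des}|+1)\times I$ and $(|\mathcal F_{des}|+1)\times(I+1)$, where the first column of $\mathbf A_0$ corresponds to the zero cell $\boldsymbol 0$. Then: (i) $HAS(\mathcal F_{asc})$ and $QLL(\mathcal F_{asc})$ are the relational models on $\mathcal I$ generated by $\mathbf A$ and $\mathbf A_1$, respectively; (ii) $LL(\mathcal F_{asc})$ is the relational model on $\mathcal I_0$ generated by $\mathbf A_0$; (iii) $HAS(\mathcal F_{asc})$ and $LL(\mathcal F_{asc})$ each have $|\mathcal F_{asc}|$ degrees of freedom, and $QLL(\mathcal F_{asc})$ has $|\mathcal F_{asc}|-1$ degrees of freedom.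
   Context: For a cell $\boldsymbol i$, $\phi(\boldsymbol i)$ is the set of features whose coordinate in $\boldsymbol i$ is $1$ ($\phi(\boldsymbol 0)=\varnothing$). An ascending class is closed under supersets within $\mathcal F$. The relational model on a finite sample space $\mathcal T$ generated by a 0–1 matrix $\mathbf M$ with columns indexed by $\mathcal T$ is the set of strictly positive probability distributions $\boldsymbol p$ on $\mathcal T$ with $\log\boldsymbol p=\mathbf M^\top\boldsymbol\beta$ for some $\boldsymbol\beta$; its number of degrees of freedom is $|\mathcal T|-\mathrm{rank}(\mathbf M)$. $HAS(\mathcal F_{asc})$: strictly positive distributions $\boldsymbol p$ on $\mathcal I$ such that, writing $\log p(\boldsymbol i)=\sum_{\varnothing\neq V\subseteq\phi(\boldsymbol i)}\beta_V$ (a unique representation), $\beta_V=0$ for all $V\in\mathcal F_{asc}$ (equivalently, all conditional Aitchison–Silvey ratios $\mathrm{CASR}(V\mid\mathcal F\setminus V=\mathbf 0)=\prod_{\varnothing\ne U\subseteq V,|U|\equiv|V|(2)}p(U)/\prod_{\varnothing\ne U\subseteq V,|U|\not\equiv|V|(2)}p(U)$ equal $1$ for $V\in\mathcal F_{asc}$). $LL(\mathcal F_{asc})$: strictly positive distributions $\boldsymbol p$ on $\mathcal I_0$ such that, writing $\log p(\boldsymbol i)=\sum_{V\subseteq\phi(\boldsymbol i)}\beta_V$ ($V$ ranging over all subsets including $\varnothing$), $\beta_V=0$ for all $V\in\mathcal F_{asc}$ (the hierarchical log-linear model). $QLL(\mathcal F_{asc})$: the set of distributions $\boldsymbol\pi$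 on $\mathcal I$ of the form $\pi(\boldsymbol i)=p(\boldsymbol i)/\sum_{\boldsymbol j\in\mathcal I}p(\boldsymbol j)$ for some $\boldsymbol p\in LL(\mathcal F_{asc})$. *)

(* Defs.v *)
From HB Require Import structures.
From mathcomp Require Import all_boot all_order all_algebra.
From mathcomp Require Import reals exp.
Set Implicit Arguments. Unset Strict Implicit. Unset Printing Implicit Defensive.
Import Order.TTheory GRing.Theory Num.Theory.
Local Open Scope ring_scope.

(* Features F_1..F_k are indexed by 'I_k.  A cell i in {0,1}^k is identified
   with phi(i), the set of features whose coordinate is 1, i.e. with a set
   {set 'I_k}.  Hence I_0 = {set 'I_k}, and I = nonzero cells = nonempty sets. *)
Definition cellI (k : nat) := {A : {set 'I_k} | A != set0}.

Definition ascending (k : nat) (Fasc : {set {set 'I_k}}) : Prop :=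
  forall V W : {set 'I_k}, V \in Fasc -> V \subset W -> W \in Fasc.

Definition in_Fdes (k : nat) (Fasc : {set {set 'I_k}}) (W : {set 'I_k}) : bool :=
  (W \notin Fasc) && (W != set0).
Definition Fdes (k : nat) (Fasc : {set {set 'I_k}}) :=
  {W : {set 'I_k} | in_Fdes Fasc W}.

Definition rel_model (R : realType) (S T : finType) (M : S -> T -> R)
    (p : T -> R) : Prop :=
  (forall t, 0 < p t) /\ \sum_(t : T) p t = 1 /\
  exists beta : S -> R, forall t, ln (p t) = \sum_(s : S) M s t * beta s.

Definition mx_of (R : realType) (S T : finType) (M : S -> T -> R)
  : 'M[R]_(#|S|, #|T|) := \matrix_(i, j) M (enum_val i) (enum_val j).

Definition dof (R : realType) (S T : finType) (M : S -> T -> R) : nat :=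
  (#|T| - \rank (mx_of M))%N.

Definition matA (R : realType) (k : nat) (Fasc : {set {set 'I_k}})
  (W : Fdes Fasc) (i : cellI k) : R :=
  if val W \subset val i then 1 else 0.

(* A_1 = (1^T ; A): the extra first row is the [None] row *)
Definition matA1 (R : realType) (k : nat) (Fasc : {set {set 'I_k}})
  (W : option (Fdes Fasc)) (i : cellI k) : R :=
  match W with None => 1 | Some W => matA R W i end.

(* A_0 = (1 1^T ; 0 A): columns indexed by I_0 = {set 'I_k}, the zero cell
   being set0 (the first column). *)
Definition matA0 (R : realType) (k : nat) (Fasc : {set {set 'I_k}})
  (W : option (Fdes Fasc)) (i : {set 'I_k}) : R :=
  match W with
  | None => 1
  | Some W => if i == set0 then 0 else (if val W \subset i then 1 else 0)
  end.

Definition HAS (R : realType) (k : nat) (Fasc : {set {set 'I_k}})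
    (p : cellI k -> R) : Prop :=
  (forall i, 0 < p i) /\ \sum_(i : cellI k) p i = 1 /\
  exists beta : cellI k -> R,
    (forall i : cellI k, ln (p i) = \sum_(V : cellI k | val V \subset val i) beta V)
    /\ (forall V : cellI k, val V \in Fasc -> beta V = 0).

Definition LL (R : realType) (k : nat) (Fasc : {set {set 'I_k}})
    (p : {set 'I_k} -> R) : Prop :=
  (forall i, 0 < p i) /\ \sum_(i : {set 'I_k}) p i = 1 /\
  exists beta : {set 'I_k} -> R,
    (forall i : {set 'I_k}, ln (p i) = \sum_(V : {set 'I_k} | V \subset i) beta V)
    /\ (forall V : {set 'I_k}, V \in Fasc -> beta V = 0).

Definition QLL (R : realType) (k : nat) (Fasc : {set {set 'I_k}})
    (pi : cellI k -> R) : Prop :=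
  exists p : {set 'I_k} -> R, LL Fasc p /\
    forall i : cellI k, pi i = p (val i) / \sum_(j : cellI k) p (val j).

(* Main.v *)
Require Import Defs.
From HB Require Import structures.
From mathcomp Require Import all_boot all_order all_algebra.
From mathcomp Require Import reals exp.
From mathcomp Require Import lra zify.
Import Order.TTheory GRing.Theory Num.Theory.
Set Implicit Arguments. Unset Strict Implicit. Unset Printing Implicit Defensive.
Local Open Scope ring_scope.

Lemma big_opt (R : realType) (T : finType) (F : option T -> R) :
  \sum_(x : option T) F x = F None + \sum_(j : T) F (Some j).
Proof.
rewrite (bigD1 None) //=; congr (_ + _).
rewrite (reindex_omap Some id) /=; last by case.
by apply: eq_bigl => j; rewrite eqxx.
Qed.

Lemma sum_sig (R : realType) (T : finType) (P Q : pred T) (F : T -> R) :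
  \sum_(x : {x | P x} | Q (val x)) F (val x) = \sum_(x | P x && Q x) F x.
Proof.
symmetry; rewrite (reindex_omap (J := {x | P x}) val insub).
  by apply: eq_bigl => j; rewrite valK eqxx andbT (valP j).
by move=> i /andP[Pi _]; rewrite insubT.
Qed.

Lemma sum_sig1 (R : realType) (T : finType) (P : pred T) (F : T -> R) :
  \sum_(x : {x | P x}) F (val x) = \sum_(x | P x) F x.
Proof.
have := sum_sig P xpredT F; rewrite /=.
under [in RHS]eq_bigl do rewrite andbT. by [].
Qed.

Definition ext (R : realType) (T : Type) (P : pred T) (g : {x | P x} -> R) (V : T) : R :=
  if insub V is Some y then g y else 0.

Lemma extE (R : realType) (T : Type) (P : pred T) (g : {x | P x} -> R) y :
  ext g (val y) = g y.
Proof. by rewrite /ext valK. Qed.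

Lemma extN (R : realType) (T : Type) (P : pred T) (g : {x | P x} -> R) x :
  ~~ P x -> ext g x = 0.
Proof. by move=> h; rewrite /ext insubN. Qed.

Lemma alt0 (R : realType) (k : nat) (W : {set 'I_k}) : W != setT ->
  \sum_(i : {set 'I_k} | W \subset i) (-1) ^+ #|i| = 0 :> R.
Proof.
move=> hW.
have : ~~ (setT \subset W) by rewrite subTset.
case/subsetPn => x _ xW.
pose f := fun i : {set 'I_k} => if x \in i then i :\ x else x |: i.
have finv : involutive f.
  move=> i; rewrite /f; case: (boolP (x \in i)) => xi.
    by rewrite setD11 setD1K.
  by rewrite setU11 setU1K.
have hs : forall i, (W \subset f i) = (W \subset i).
  move=> i; rewrite /f; case: (x \in i).
    by rewrite subsetD1 xW andbT.
  apply/idP/idP => h; last exact: (subset_trans h (subsetUr _ _)).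
  apply/subsetP => y yW; have := subsetP h y yW; rewrite in_setU1.
  by case/orP => // /eqP e; rewrite -e yW in xW.
have hc : forall i, (-1) ^+ #|f i| = - (-1) ^+ #|i| :> R.
  move=> i; rewrite /f; case: (boolP (x \in i)) => xi.
    by rewrite [in RHS](cardsD1 x i) xi add1n exprS mulN1r opprK.
  by rewrite cardsU1 xi add1n exprS mulN1r.
set S := (X in X = 0).
have : S = - S.
  rewrite {1}/S (reindex_inj (inv_inj finv)) /= -sumrN.
  by apply: eq_big => i; [rewrite hs | move=> _; rewrite hc].
move=> h; lra.
Qed.

Lemma injA (R : realType) (k : nat) (Fasc : {set {set 'I_k}}) (u : Fdes Fasc -> R) :
  (forall i : cellI k, \sum_W u W * matA R W i = 0) -> forall W, u W = 0.
Proof.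
move=> H.
suff h : forall n (W : Fdes Fasc), (#|val W| < n)%N -> u W = 0 by move=> W; exact: (h _ W (ltnSn _)).
elim=> [//|n IH] W hW.
have W0 : val W != set0 by case/andP: (valP W).
have := H (exist _ (val W) W0).
rewrite (bigD1 W) //= /matA /= subxx mulr1 big1 ?addr0 //.
move=> W' hW'; case: ifP => [hs|]; last by rewrite mulr0.
case: (eqVproper hs) => [e|hp].
  by move/val_inj: e => e; rewrite e eqxx in hW'.
rewrite IH ?mul0r //.
exact: (leq_trans (proper_card hp)).
Qed.

Lemma injA0 (R : realType) (k : nat) (Fasc : {set {set 'I_k}}) (u : option (Fdes Fasc) -> R) :
  (forall i : {set 'I_k}, \sum_s u s * matA0 R s i = 0) -> forall s, u s = 0.
Proof.
move=> H.
have hN : u None = 0.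
  have := H set0; rewrite big_opt /= big1 ?addr0 ?mulr1 //.
  by move=> W _; rewrite eqxx mulr0.
have hS : forall W, u (Some W) = 0.
  apply: injA => i; have := H (val i); rewrite big_opt /= hN mul0r add0r => h.
  rewrite -[X in _ = X]h; apply: eq_bigr => W _ /=.
  by rewrite /matA0 /matA (negbTE (valP i)).
by case.
Qed.

Lemma injA1 (R : realType) (k : nat) (Fasc : {set {set 'I_k}}) (u : option (Fdes Fasc) -> R) :
  [set: 'I_k] \in Fasc -> set0 \notin Fasc ->
  (forall i : cellI k, \sum_s u s * matA1 R s i = 0) -> forall s, u s = 0.
Proof.
move=> hT h0 H.
have T0 : (set0 : {set 'I_k}) != setT.
  by apply/eqP => e; rewrite e hT in h0.
pose b := u None.
pose g := fun i : {set 'I_k} => \sum_(W : Fdes Fasc) u (Some W) * (if val W \subset i then 1 else 0).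
have E : forall i : {set 'I_k}, i != set0 -> b + g i = 0.
  move=> i hi; have := H (exist _ i hi); rewrite big_opt /= mulr1 => <-.
  by [].
pose S := \sum_(i : {set 'I_k}) (-1) ^+ #|i| * (b + g i).
have S1 : S = b.
  rewrite /S (bigD1 set0) //= big1 ?addr0.
    rewrite cards0 expr0 mul1r /g big1 ?addr0 //.
    by move=> W _; rewrite subset0; case/andP: (valP W) => _ /negbTE ->; rewrite mulr0.
  by move=> i hi; rewrite E // mulr0.
have S0 : S = 0.
  rewrite /S; under eq_bigr do rewrite mulrDr.
  rewrite big_split /= -mulr_suml.
  have -> : \sum_(i : {set 'I_k}) (-1) ^+ #|i| = 0 :> R.
    by rewrite -[RHS](alt0 R T0); apply: eq_bigl => i; rewrite sub0set.
  rewrite mul0r add0r /g.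
  under eq_bigr do rewrite mulr_sumr.
  rewrite exchange_big /= big1 //= => W _.
  under eq_bigr do rewrite mulrCA.
  rewrite -mulr_sumr.
  have -> : \sum_(i : {set 'I_k}) (-1) ^+ #|i| * (if sval W \subset i then 1 else 0) = 0 :> R.
    rewrite -[RHS](alt0 R (W := sval W)); last first.
      have : sval W \notin Fasc by case/andP: (valP W).
      by apply: contra => /eqP ->.
    rewrite [RHS]big_mkcond; apply: eq_bigr => i _.
    by case: ifP; rewrite ?mulr1 ?mulr0.
  by rewrite mulr0.
have hb : b = 0 by rewrite -S1 S0.
have hS : forall W, u (Some W) = 0.
  apply: injA => i; have := H i; rewrite big_opt /= -/b hb mul0r add0r.
  by [].
by case.
Qed.

Lemma dof_full (R : realType) (S T : finType) (M : S -> T -> R) :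
  (forall u : S -> R, (forall t, \sum_s u s * M s t = 0) -> forall s, u s = 0) ->
  dof M = (#|T| - #|S|)%N.
Proof.
move=> H; rewrite /dof.
suff /eqP -> : row_free (mx_of M) by [].
apply: inj_row_free => v hv; apply/rowP => i; rewrite !mxE.
pose u := fun s : S => (v 0 (enum_rank s) : R).
have hu : forall t, \sum_s u s * M s t = 0.
  move=> t; have := congr1 (fun A : 'M[R]_(1, #|T|) => A 0 (enum_rank t)) hv; rewrite !mxE /= => e; rewrite -[RHS]e.
  rewrite (reindex enum_rank) /=; last by apply: onW_bij; exact: enum_rank_bij.
  by apply: eq_bigr => s _; rewrite /mx_of mxE !enum_rankK.
by have := H u hu (enum_val i); rewrite /u enum_valK.
Qed.

Lemma key_sum (R : realType) (k : nat) (Fasc : {set {set 'I_k}}) (G : {set 'I_k} -> R)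
  (i : {set 'I_k}) : (forall V, V \in Fasc -> G V = 0) ->
  \sum_(V : {set 'I_k} | (V != set0) && (V \subset i)) G V =
  \sum_(W : Fdes Fasc) (if val W \subset i then 1 else 0) * G (val W).
Proof.
move=> hG.
rewrite (eq_bigr (fun W : Fdes Fasc => if val W \subset i then G (val W) else 0)); last first.
  by move=> W _; case: ifP; rewrite ?mul1r ?mul0r.
rewrite -big_mkcond /= (sum_sig (in_Fdes Fasc) (fun V => V \subset i) G).
rewrite (bigID (fun V => V \in Fasc)) /= big1 ?add0r.
  apply: eq_bigl => V; rewrite /in_Fdes.
  by case: (V \in Fasc); case: (V == set0); case: (V \subset i).
by move=> V /andP[_ /hG].
Qed.

Lemma card_cellI (k : nat) : #|{: cellI k}| = #|{: {set 'I_k}}|.-1.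
Proof. by rewrite card_sig -(cardC1 (set0 : {set 'I_k})); apply: eq_card => V. Qed.

Lemma card_Fdes (k : nat) (Fasc : {set {set 'I_k}}) : set0 \notin Fasc ->
  (#|Fasc| + #|{: Fdes Fasc}|).+1 = #|{: {set 'I_k}}|.
Proof.
move=> h0; rewrite card_sig -(cardsC Fasc) (cardsD1 set0 (~: Fasc)) in_setC h0.
rewrite add1n addnS; congr (_ + _).+1; apply: eq_card => V.
by rewrite !inE andbC.
Qed.

Lemma ext0 (R : realType) (k : nat) (Fasc : {set {set 'I_k}}) (g : Fdes Fasc -> R) V :
  V \in Fasc -> ext g V = 0.
Proof. by move=> h; apply: extN; rewrite /in_Fdes h. Qed.

Lemma HAS_iff (R : realType) (k : nat) (Fasc : {set {set 'I_k}}) (p : cellI k -> R) :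
  HAS Fasc p <-> rel_model (matA R (Fasc:=Fasc)) p.
Proof.
split.
  case=> pos [s1 [beta [hb h0]]]; split=> //; split=> //.
  exists (fun W => ext beta (val W)) => i; rewrite hb.
  rewrite (eq_bigr (fun V : cellI k => ext beta (val V))); last by move=> V _; rewrite extE.
  rewrite (sum_sig (fun V => V != set0) (fun V => V \subset val i) (ext beta)).
  rewrite (key_sum (Fasc := Fasc)) //.
  move=> V hV; rewrite /ext; case: insubP => // y _ ey; apply: h0; by rewrite ey.
case=> pos [s1 [beta hb]]; split=> //; split=> //.
exists (fun V : cellI k => ext beta (val V)); split; last first.
  by move=> V hV; apply: ext0.
move=> i; rewrite hb.
rewrite (sum_sig (fun V => V != set0) (fun V => V \subset val i) (ext beta)).
rewrite (key_sum (Fasc := Fasc)); last by move=> V; apply: ext0.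
by apply: eq_bigr => W _; rewrite extE.
Qed.

Lemma matA0E (R : realType) (k : nat) (Fasc : {set {set 'I_k}}) (W : Fdes Fasc) i :
  matA0 R (Some W) i = if val W \subset i then 1 else 0.
Proof.
rewrite /matA0; case: eqP => // ->; rewrite subset0.
by case/andP: (valP W) => _ /negbTE ->.
Qed.

Lemma split0 (R : realType) (k : nat) (beta : {set 'I_k} -> R) (i : {set 'I_k}) :
  \sum_(V : {set 'I_k} | V \subset i) beta V = beta set0 + \sum_(V : {set 'I_k} | (V != set0) && (V \subset i)) beta V.
Proof.
rewrite (bigD1 set0) ?sub0set //=; congr (_ + _).
by apply: eq_bigl => V; rewrite andbC.
Qed.

Lemma LL_iff (R : realType) (k : nat) (Fasc : {set {set 'I_k}}) (p : {set 'I_k} -> R) :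
  set0 \notin Fasc ->
  LL Fasc p <-> rel_model (matA0 R (Fasc:=Fasc)) p.
Proof.
move=> H0; split.
  case=> pos [s1 [beta [hb h0]]]; split=> //; split=> //.
  exists (fun s => if s is Some W then beta (val W) else beta set0) => i.
  rewrite hb big_opt split0 (key_sum (Fasc := Fasc)) //.
  congr (_ + _); first by rewrite /= mul1r.
  by apply: eq_bigr => W _; rewrite matA0E.
case=> pos [s1 [beta hb]]; split=> //; split=> //.
exists (fun V => if V == set0 then beta None else ext (fun W => beta (Some W)) V); split.
  move=> i; rewrite hb split0 eqxx big_opt; congr (_ + _); first by rewrite /= mul1r.
  rewrite (eq_bigr (fun V => ext (fun W => beta (Some W)) V)); last first.
    by move=> V /andP[/negbTE -> _].
  rewrite (key_sum (Fasc := Fasc)); last by move=> V; apply: ext0.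
  by apply: eq_bigr => W _; rewrite extE matA0E.
move=> V hV; have -> : (V == set0) = false.
  by apply/negbTE; apply: contra H0 => /eqP <-.
exact: ext0.
Qed.

Lemma QLL_iff (R : realType) (k : nat) (Fasc : {set {set 'I_k}}) (pi : cellI k -> R) :
  set0 \notin Fasc -> cellI k ->
  QLL Fasc pi <-> rel_model (matA1 R (Fasc:=Fasc)) pi.
Proof.
move=> H0 c0; split.
  case=> p0 [[pos0 [s0 [beta [hb h0]]]] hpi].
  set Z := \sum_(j : cellI k) p0 (val j).
  have Zpos : forall i : cellI k, 0 < Z.
    move=> i; rewrite /Z (bigD1 i) //=.
    apply: lt_le_trans (pos0 (val i)) _; rewrite lerDl.
    by apply: sumr_ge0 => j _; apply: ltW.
  have pipos : forall i, 0 < pi i.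
    by move=> i; rewrite hpi; apply: divr_gt0; [apply: pos0 | apply: Zpos i].
  split; first exact: pipos.
  split.
    under eq_bigr do rewrite hpi.
    by rewrite -mulr_suml -/Z divff // lt0r_neq0 // (Zpos c0).
  exists (fun s => if s is Some W then beta (val W) else beta set0 - ln Z) => i.
  rewrite hpi ln_div ?posrE ?pos0 ?(Zpos i) // hb split0 (key_sum (Fasc:=Fasc)) // big_opt.
  rewrite [in RHS]/= mul1r addrAC; congr (_ + _).
case=> pos [s1 [beta hb]].
set e := sequences.expR (beta None).
set t := (1 + e)^-1.
have e0 : 0 < e by apply: expR_gt0.
have t0 : 0 < t by rewrite invr_gt0; lra.
have et : e * t + t = 1.
  rewrite -[X in _ + X]mul1r -mulrDl addrC mulfV // lt0r_neq0 //; lra.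
pose p0 := fun V : {set 'I_k} => if V == set0 then e * t else t * ext pi V.
have p0c : forall c : cellI k, p0 (val c) = t * pi c.
  by move=> c; rewrite /p0 (negbTE (valP c)) extE.
have sp0 : \sum_(j : cellI k) p0 (val j) = t.
  by under eq_bigr do rewrite p0c; rewrite -mulr_sumr s1 mulr1.
exists p0; split; last first.
  move=> i; rewrite p0c sp0.
  by rewrite mulrAC mulfV ?mul1r // lt0r_neq0.
split.
  move=> V; rewrite /p0; case: ifP => hV; first exact: mulr_gt0.
  rewrite /ext; case: insubP => [c _ _|]; first exact: mulr_gt0.
  by move/negPn; rewrite hV.
split.
  rewrite (bigD1 set0) //= -(sum_sig1 (fun V => V != set0) p0) sp0.
  by rewrite /p0 eqxx.
exists (fun V => if V == set0 then ln (e * t) else ext (fun W => beta (Some W)) V); split.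
  move=> i; rewrite split0 eqxx.
  rewrite (eq_bigr (fun V => ext (fun W => beta (Some W)) V)); last first.
    by move=> V /andP[/negbTE -> _].
  rewrite (key_sum (Fasc := Fasc)); last by move=> V; apply: ext0.
  case: (eqVneq i set0) => [->|hi].
    rewrite /p0 eqxx big1 ?addr0 // => W _; rewrite subset0.
    by case/andP: (valP W) => _ /negbTE ->; rewrite mul0r.
  have -> : p0 i = t * pi (exist _ i hi) by rewrite -(p0c (exist _ i hi)).
  rewrite [in RHS]lnM ?posrE // [in LHS]lnM ?posrE // hb big_opt /e expRK.
  rewrite [in RHS](eq_bigr (fun W : Fdes Fasc => (if val W \subset i then 1 else 0) * beta (Some W))); last first.
    by move=> W _; congr (_ * _); apply: extE.
  rewrite [in LHS]/= mul1r addrA [ln t + _]addrC.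
  by [].
move=> V hV; have -> : (V == set0) = false.
  by apply/negbTE; apply: contra H0 => /eqP <-.
exact: ext0.
Qed.

Theorem theorem5 (R : realType) (k : nat) (Fasc : {set {set 'I_k}}) :
  Fasc != set0 -> ascending Fasc -> set0 \notin Fasc ->
  (forall p : cellI k -> R, HAS Fasc p <-> rel_model (matA R (Fasc:=Fasc)) p) /\
  (forall p : cellI k -> R, QLL Fasc p <-> rel_model (matA1 R (Fasc:=Fasc)) p) /\
  (forall p : {set 'I_k} -> R, LL Fasc p <-> rel_model (matA0 R (Fasc:=Fasc)) p) /\
  dof (matA R (Fasc:=Fasc)) = #|Fasc| /\
  dof (matA0 R (Fasc:=Fasc)) = #|Fasc| /\
  dof (matA1 R (Fasc:=Fasc)) = (#|Fasc| - 1)%N.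
Proof.
move=> hne hasc h0.
have hT : [set: 'I_k] \in Fasc.
  by case/set0Pn: hne => V hV; apply: (hasc V) => //; apply: subsetT.
have T0 : [set: 'I_k] != set0 by apply: contra h0 => /eqP <-.
pose c0 : cellI k := exist (fun A : {set 'I_k} => A != set0) setT T0.
have hc := card_Fdes h0.
have hcI := card_cellI k.
have hF1 : (1 <= #|Fasc|)%N by rewrite card_gt0.
split; first exact: HAS_iff.
split; first by move=> p; apply: QLL_iff.
split; first by move=> p; apply: LL_iff.
split.
  rewrite dof_full; last first.
    by move=> u hu; apply: injA => i; rewrite -[RHS](hu i).
  by rewrite hcI -hc /= addnK.
split.
  rewrite dof_full; last by move=> u hu; apply: injA0.
  by rewrite card_option -hc subSS addnK.
rewrite dof_full; last by move=> u hu; apply: injA1.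
by rewrite card_option hcI -hc /= subnS addnK subn1.
Qed.
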